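(* For each $\lambda\in\Lambda$, the operator $R^\varpi_\lambda$ on $\mathcal{V}_\Lambda$ defined by $R^\varpi_\lambda e_\eta=\varpi(\eta,\lambda)e_{\lambda+\eta}$ satisfies $\mathbb{M}_i(R^\varpi_\lambda)>-\infty$ for $i=1,2$.
   Context: Let $\mathbb{K}$ be a real quadratic field with real embeddings $\iota_1,\iota_2$ and Galois involution $c:x\mapsto x'$; let $\theta\in\mathbb{K}$ be a quadratic irrationality and $\Lambda=\{(n+m\theta,n+m\theta'):n,m\in\mathbb{Z}\}$. Let $\omega\in\mathbb{K}^*$ with $\omega\omega'=1$, and $\varpi(\lambda,\eta)=\omega^{(n,m)\wedge(r,k)}$ for $\lambda=(n+m\theta,n+m\theta')$, $\eta=(r+k\theta,r+k\theta')$, where $(a,b)\wedge(c,d)=ad-bc$. Let $\mathcal{V}_\Lambda$ be the $\mathbb{K}$-vector space with basis $\{e_\lambda\}_{\lambda\in\Lambda}$ with the pairing $(v,w)=\sum_\lambda c(a_\lambda)b_\lambda$ for $v=\sum a_\lambda e_\lambda$, $w=\sum b_\lambda e_\lambda$. For a $\mathbb{K}$-linear operator $T$ on $\mathcal{V}_\Lambda$, $\mathbb{M}_i(T):=\inf_{(v,v)=1}\iota_i((Tv,Tv))\in[-\infty,\infty)$. *)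

(* Defs.v *)
From HB Require Import structures.
From mathcomp Require Import all_boot all_order all_algebra.
From mathcomp Require Import finmap.
From mathcomp Require Import all_classical all_reals ereal.
Set Implicit Arguments. Unset Strict Implicit. Unset Printing Implicit Defensive.
Import Order.TTheory GRing.Theory Num.Theory.
Local Open Scope ring_scope.

(* The lattice Lambda = {(n + m theta, n + m theta') : n, m in Z} is indexed by
   its coordinates (n, m) in Z^2 (a bijection since theta is irrational).  *)
Definition LamIdx := (int * int)%type.

Definition lam_add (l e : LamIdx) : LamIdx := (l.1 + e.1, l.2 + e.2).
Definition lam_sub (l e : LamIdx) : LamIdx := (l.1 - e.1, l.2 - e.2).

Definition wedge (l e : LamIdx) : int := l.1 * e.2 - l.2 * e.1.

Definition varpi (K : fieldType) (omega : K) (l e : LamIdx) : K :=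
  omega ^ (wedge l e).

(* V_Lambda : finitely supported families (a_lambda) = sum a_lambda e_lambda *)
Definition VLam (K : fieldType) := fsfun (fun _ : LamIdx => (0 : K)).

Definition ebasis (K : fieldType) (l : LamIdx) : VLam K :=
  [fsfun x in [fset l]%fset => (1 : K) | 0].

Definition pairing (K : fieldType) (c : K -> K) (v w : VLam K) : K :=
  \sum_(l <- fsetU (finsupp v) (finsupp w)) c (v l) * w l.

(* R^varpi_lambda e_eta = varpi(eta, lambda) e_(lambda + eta), extended linearly *)
Definition Rop (K : fieldType) (omega : K) (l : LamIdx) (v : VLam K) : VLam K :=
  [fsfun x in [fset lam_add l e | e in finsupp v]%fset =>
     varpi omega (lam_sub x l) l * v (lam_sub x l) | 0].

Definition Mbound (K : fieldType) (R : realType) (c : K -> K) (iota : K -> R)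
  (T : VLam K -> VLam K) : \bar R :=
  ereal_inf [set ((iota (pairing c (T v) (T v)))%:E)%E
            | v in [set v : VLam K | pairing c v v = 1]]%classic.

(* Main.v *)
Require Import Defs.
From HB Require Import structures.
From mathcomp Require Import all_boot all_order all_algebra.
From mathcomp Require Import finmap.
From mathcomp Require Import all_classical all_reals ereal.
Import Order.TTheory GRing.Theory Num.Theory.
Local Open Scope ring_scope.

Local Open Scope fset_scope.

Lemma pairingE (K : fieldType) (c : {rmorphism K -> K}) (w : VLam K) :
  pairing c w w = \sum_(x <- finsupp w) c (w x) * w x.
Proof. by rewrite /pairing fsetUid. Qed.

Lemma subaddK (l e : LamIdx) : lam_sub (lam_add l e) l = e.
Proof. by case: l e => [a b] [x y]; rewrite /lam_sub /lam_add /= !(addrC a) !(addrC b) !addrK. Qed.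

Lemma pairing_Rop (K : fieldType) (c : {rmorphism K -> K}) (omega : K)
  (homega0 : omega != 0) (homega : omega * c omega = 1) l v :
  pairing c (Rop omega l v) (Rop omega l v) = pairing c v v.
Proof.
rewrite !pairingE.
set S := [fset lam_add l e | e in finsupp v].
have Rin : forall x, Rop omega l v x = if x \in S then varpi omega (lam_sub x l) l * v (lam_sub x l) else 0.
  by move=> x; rewrite /Rop fsfunE.
rewrite (big_fset_incl _ (B := S)); last 2 first.
- apply/fsubsetP => x; rewrite mem_finsupp Rin; case: ifP => //; by rewrite eqxx.
- by move=> x _ /fsfun_dflt ->; rewrite rmorph0 mul0r.
rewrite big_imfset /=; last by move=> a b _ _ /(congr1 (lam_sub^~ l)); rewrite !subaddK.
apply: eq_big_seq => e he.
rewrite Rin in_imfset /=; last by move: he; rewrite /enum_finmem /= ?mem_enum_fset //.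
rewrite !(subaddK l e) rmorphM mulrACA.
suff -> : c (varpi omega e l) * varpi omega e l = 1 by rewrite mul1r.
have Uo : omega \is a GRing.unit by rewrite unitfE.
rewrite /varpi rmorphXz // -expfzMl mulrC homega.
by rewrite exp1rz.
Qed.

Local Close Scope fset_scope.

Theorem lemma8p11 (R : realType) (K : fieldType)
  (c : {rmorphism K -> K}) (iota1 iota2 : {rmorphism K -> R}) (theta omega : K)
  (* c is an involution, not the identity (the Galois involution) *)
  (hc_inv : forall x : K, c (c x) = x)
  (hc_nid : exists x : K, c x != x)
  (* the two real embeddings *)
  (hiota : forall x : K, iota2 x = iota1 (c x))
  (* theta is irrational and K = Q(theta), so K is a real quadratic field *)
  (htheta_irr : forall q : rat, theta != ratr q)
  (hK : forall x : K, exists a b : rat, x = ratr a + ratr b * theta)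
  (* omega in K^*, omega omega' = 1 *)
  (homega0 : omega != 0) (homega : omega * c omega = 1)
  (l : LamIdx) :
  (-oo < Mbound c iota1 (Rop omega l))%E /\ (-oo < Mbound c iota2 (Rop omega l))%E.
Proof.
have key : forall iota : {rmorphism K -> R}, (-oo < Mbound c iota (Rop omega l))%E.
  move=> iota; apply: (@lt_le_trans _ _ 1%:E); first exact: ltNyr.
  apply: le_ereal_inf_tmp => y [v /= hv <-].
  by rewrite pairing_Rop // hv rmorph1.
split; first exact: key.
apply: (@lt_le_trans _ _ 1%:E); first exact: ltNyr.
apply: le_ereal_inf_tmp => y [v /= hv <-].
by rewrite pairing_Rop // hv hiota rmorph1 rmorph1.
Qed.
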